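(* In any $\{K_3,K_4\}$-decomposition of $K_{18}$ with $\alpha=13$, there are $7$ distinct vertices $w_1,\dots,w_7$ with $\alpha_{w_i}=4$ for all $i\in\{1,\dots,7\}$, and at least two of the copies of $K_3$ in the decomposition have all three of their vertices in $\{w_1,\dots,w_7\}$.
   Context: A $\{K_3,K_4\}$-decomposition of $K_v$ is a collection of subgraphs, each isomorphic to $K_3$ or $K_4$ (triples and quadruples), such that every edge of $K_v$ lies in exactly one of them. $\alpha$ is the number of copies of $K_3$ in the decomposition, and for a vertex $x$, $\alpha_x$ is the number of copies of $K_3$ in the decomposition containing $x$. *)

(* Defs.v *)
From mathcomp Require Import all_boot.
Set Implicit Arguments. Unset Strict Implicit. Unset Printing Implicit Defensive.

(* A {K3,K4}-decomposition of the complete graph on the vertex set T: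
   a family D of blocks (vertex sets of the copies of K3 / K4), each of size
   3 or 4, such that every edge {x,y} (x <> y) lies in exactly one block. *)
Definition K34_decomposition (T : finType) (D : {set {set T}}) : Prop :=
  (forall B, B \in D -> (#|B| == 3) || (#|B| == 4)) /\
  (forall x y : T, x != y -> #|[set B in D | (x \in B) && (y \in B)]| = 1).

Definition triples (T : finType) (D : {set {set T}}) : {set {set T}} :=
  [set B in D | #|B| == 3].

Definition alpha (T : finType) (D : {set {set T}}) : nat := #|triples D|.

Definition alpha_at (T : finType) (D : {set {set T}}) (x : T) : nat :=
  #|[set B in triples D | x \in B]|.

(* Main.v *)
Require Import Defs.
From mathcomp Require Import all_boot zify.

Section Lem.
Variable T : finType.
Variable D : {set {set T}}.
Hypothesis HD : forall x y : T, x != y -> #|[set B in D | (x \in B) && (y \in B)]| = 1.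

Lemma card_sum (A : {pred {set T}}) (P : pred {set T}) :
  #|[set B in A | P B]| = \sum_(B in A | P B) 1.
Proof. by rewrite -sum1_card; apply: eq_bigl => B; rewrite !inE. Qed.

Lemma vertex_lemma x (Y : {set T}) : x \notin Y ->
  #|Y| = \sum_(B in D | x \in B) #|B :&: Y|.
Proof.
move=> xY.
rewrite -sum1_card.
transitivity (\sum_(y in Y) \sum_(B in D | x \in B) ((y \in B) : nat)).
  apply: eq_bigr => y yY.
  have xy : x != y by apply: contraNneq xY => ->.
  rewrite -(HD _ _ xy) card_sum big_mkcondr /=.
  by rewrite [RHS]big_mkcondr; apply: eq_bigr => B _; case: (x \in B); case: (y \in B).
rewrite exchange_big /=; apply: eq_bigr => B _.
rewrite -sum1_card big_mkcond /= [RHS]big_mkcond /=; apply: eq_bigr => y _.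
by rewrite !inE; case: (y \in Y); case: (y \in B).
Qed.

Lemma pair_lemma (X : {set T}) :
  'C(#|X|, 2) = \sum_(B in D) 'C(#|B :&: X|, 2).
Proof.
rewrite -cards_draws -sum1_card.
transitivity (\sum_(P in [set A : {set T} | A \subset X & #|A| == 2])
                \sum_(B in D) ((P \subset B) : nat)).
  apply: eq_bigr => P; rewrite inE => /andP[_ /cards2P [x [y [xy ->]]]].
  rewrite -(HD _ _ xy) card_sum big_mkcondr /=; apply: eq_bigr => B _.
  by rewrite subUset !sub1set; case: (x \in B); case: (y \in B).
rewrite exchange_big /=; apply: eq_bigr => B _.
rewrite -cards_draws -sum1_card big_mkcond /= [RHS]big_mkcond /=; apply: eq_bigr => P _.
rewrite !inE subsetI; by case: (P \subset B); case: (P \subset X); case: (#|P| == 2).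
Qed.

Lemma incidence (F : {set {set T}}) (S : {set T}) :
  \sum_(B in F) #|B :&: S| = \sum_(y in S) #|[set B in F | y \in B]|.
Proof.
transitivity (\sum_(B in F) \sum_(y in S) ((y \in B) : nat)).
  apply: eq_bigr => B _; rewrite -sum1_card big_mkcond /= [RHS]big_mkcond /=.
  by apply: eq_bigr => y _; rewrite !inE; case: (y \in B); case: (y \in S).
rewrite exchange_big /=; apply: eq_bigr => y _.
rewrite card_sum big_mkcond /= [RHS]big_mkcond /=; apply: eq_bigr => B _.
by case: (B \in F); case: (y \in B).
Qed.
End Lem.

Lemma sum_ind (T : finType) (A : {set T}) : \sum_y ((y \in A) : nat) = #|A|.
Proof. by rewrite -sum1_card [RHS]big_mkcond; apply: eq_bigr => y _; case: (y \in A). Qed.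



Lemma test18 : \sum_(y : 'I_18) 1 = 18.
Proof. by rewrite sum1_card card_ord. Qed.

Lemma key (e : nat) : forall n, n <= 3 -> 15 * (11 + n) + e <= 'C(11 + n, 2) + 114 -> n = 0 \/ (n = 1 /\ e = 0).
Proof.
move=> n; case: n => [|[|[|[|n]]]] //= _.
- by left.
- rewrite (_ : 'C(12,2) = 66) //; lia.
Qed.

Theorem mainTheorem10 (D : {set {set 'I_18}}) :
  K34_decomposition D -> alpha D = 13 ->
  exists W : {set 'I_18},
    [/\ #|W| = 7,
        (forall w, w \in W -> alpha_at D w = 4) &
        2 <= #|[set B in triples D | B \subset W]| ].
Proof.
move=> [Hsz HD] Hal.
set quad := [set B in D | #|B| == 4].
set a := alpha_at D.
set b := fun y => #|[set B in quad | y \in B]|.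
have trisum : forall F : {set 'I_18} -> nat,
    \sum_(B in D | #|B| == 3) F B = \sum_(B in triples D) F B.
  by move=> F; apply: eq_bigl => B; rewrite !inE andbC.
have quadsum : forall F : {set 'I_18} -> nat,
    \sum_(B in D | ~~ (#|B| == 3)) F B = \sum_(B in quad) F B.
  move=> F; apply: eq_bigl => B; rewrite !inE.
  case BD: (B \in D) => //=; by case/orP: (Hsz B BD) => /eqP ->.
have H17 : forall x, 2 * a x + 3 * b x = 17.
  move=> x.
  have := @vertex_lemma _ D HD x [set~ x]; rewrite !inE eqxx => /(_ isT).
  rewrite cardsC1 card_ord /= (bigID (fun B : {set 'I_18} => #|B| == 3)) /= => ->.
  rewrite /a /alpha_at /b !card_sum !big_distrr /=.
  have Hc : forall B : {set 'I_18}, x \in B -> #|B :&: [set~ x]| = #|B|.-1.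
    move=> B xB; rewrite (cardsD1 x B) xB /=.
    have -> : B :&: [set~ x] = B :\ x by apply/setP => y; rewrite !inE andbC.
    by [].
  congr (_ + _); apply: eq_big => B; rewrite /triples ?inE.
  - by case: (B \in D); case: (x \in B); case: (#|B| == 3).
  - by move=> /andP[/andP[_ /eqP B3] xB]; rewrite Hc // B3.
  - case BD: (B \in D) => //=.
    by case/orP: (Hsz B BD) => /eqP ->; rewrite /= ?andbF ?andbT.
  - by move=> /andP[/andP[BD /eqP B4] xB]; rewrite Hc // B4.
have Hcases : forall y, [\/ a y = 1 /\ b y = 5, a y = 4 /\ b y = 3 | a y = 7 /\ b y = 1].
  move=> y; have := H17 y => h.
  have [h1|[h1|h1]] : (a y = 1 /\ b y = 5) \/ (a y = 4 /\ b y = 3) \/ (a y = 7 /\ b y = 1) by lia.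
  by constructor 1. by constructor 2. by constructor 3.
set S := [set y | a y == 1].
set W := [set y | a y == 4].
set R := [set y | a y == 7].
have Hsum : \sum_y a y = 39.
  have := @incidence _ (triples D) setT.
  rewrite (eq_bigr (fun _ => 3)); last first.
    by move=> B; rewrite /triples !inE setIT => /andP[_ /eqP].
  rewrite sum_nat_const -/(alpha D) Hal => h; rewrite -[39]/(13 * 3) h.
  by apply: eq_bigl => y; rewrite inE.
have Hcnt1 : #|S| + #|W| + #|R| = 18.
  rewrite -!sum_ind -!big_split /= -[RHS]test18; apply: eq_bigr => y _.
  by rewrite !inE; case: (Hcases y) => -[-> _].
have Hcnt2 : #|S| + 4 * #|W| + 7 * #|R| = 39.
  rewrite -!sum_ind !big_distrr -!big_split /= -[RHS]Hsum; apply: eq_bigr => y _.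
  by rewrite !inE; case: (Hcases y) => -[-> _].
have Hq : 153 = 39 + 6 * #|quad|.
  have := @pair_lemma _ D HD setT.
  rewrite cardsT card_ord (bigID (fun B : {set 'I_18} => #|B| == 3)) /= trisum quadsum.
  rewrite (eq_bigr (fun _ => 3)); last first.
    by move=> B; rewrite /triples !inE setIT => /andP[_ /eqP ->].
  rewrite [X in _ + X](eq_bigr (fun _ => 6)); last first.
    by move=> B; rewrite !inE setIT => /andP[_ /eqP ->].
  rewrite !sum_nat_const -/(alpha D) Hal => h; have : 'C(18,2) = 153 by []. move=> h2; move: h; rewrite h2. move=> h; rewrite [in RHS]mulnC; exact: h.
set e := \sum_(B in triples D) 'C(#|B :&: S|, 2).
have K1 : 3 * \sum_(B in quad) #|B :&: S| <= \sum_(B in quad) 'C(#|B :&: S|,2) + #|quad| * 6.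
  rewrite -sum_nat_const -big_split big_distrr /=; apply: leq_sum => B; rewrite inE => /andP[_ /eqP B4].
  have : #|B :&: S| <= #|B| by apply: subset_leq_card; apply: subsetIl.
  rewrite B4.
  by case: #|B :&: S| => [|[|[|[|[|]]]]].
have K2 : \sum_(B in quad) #|B :&: S| = #|S| * 5.
  rewrite incidence -sum_nat_const; apply: eq_bigr => y; rewrite inE => /eqP ay.
  have := H17 y; rewrite /b ay; lia.
have K3 : 'C(#|S|, 2) = e + \sum_(B in quad) 'C(#|B :&: S|,2).
  by rewrite (@pair_lemma _ D HD S) (bigID (fun B : {set 'I_18} => #|B| == 3)) /= trisum quadsum.
have Hs : #|S| = 11 + #|R| by lia.
have HR : #|R| <= 3 by lia.
have Hq19 : #|quad| = 19 by lia.
have := @key e _ HR; rewrite -Hs.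
have -> : 15 * #|S| + e <= 'C(#|S|, 2) + 114 by lia.
move=> /(_ isT) HR01.
case: HR01 => [R0 | [R1 e0]]; last first.
  have [x xR] : exists x, x \in R by apply/card_gt0P; rewrite R1.
  have ax : a x = 7 by move: xR; rewrite inE => /eqP.
  have xS : x \notin S by rewrite inE ax.
  have He : forall B, B \in triples D -> #|B :&: S| <= 1.
    move=> B BT; move/eqP: e0; rewrite /e sum_nat_eq0 => /forallP /(_ B) /implyP /(_ BT) h.
    rewrite leqNgt; apply: contraTN h => h; rewrite -lt0n bin_gt0 //.
  have xY : x \notin ~: S :\ x by rewrite !inE eqxx.
  have HY := @vertex_lemma _ D HD x _ xY.
  have HY5 : #|~: S :\ x| = 5.
    have := cardsD1 x (~: S); rewrite inE xS /=; have := cardsC S; rewrite card_ord; move=> h1 h2; rewrite h2 in h1; lia.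
  have L1 : \sum_(B | ((B \in D) && (x \in B)) && (#|B| == 3)) 1 <= \sum_(B in D | x \in B) #|B :&: (~: S :\ x)|.
    rewrite [X in _ <= X](bigID (fun B : {set 'I_18} => #|B| == 3)) /=; apply: leq_trans (leq_addr _ _).
    apply: leq_sum => B /andP[/andP[BD xB] /eqP B3].
    have BT : B \in triples D by rewrite /triples inE BD B3.
    have := He B BT; have := cardsID S B; rewrite B3 => hc hs.
    have := cardsD1 x (B :\: S); rewrite in_setD xS xB /= => hd.
    have -> : B :&: (~: S :\ x) = (B :\: S) :\ x.
      by apply/setP => y; rewrite !(in_setI, in_setD1, in_setD, in_setC); case: (y \in B); case: (y \in S); case: (y == x).
    rewrite hd in hc; lia.
  have L2 : \sum_(B | ((B \in D) && (x \in B)) && (#|B| == 3)) 1 = a x.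
    rewrite /a /alpha_at card_sum; apply: eq_bigl => B; rewrite /triples !inE.
    by case: (B \in D); case: (x \in B); case: (#|B| == 3).
  lia.
have HW : #|W| = 7 by lia.
have noR : forall y, a y != 7.
  move=> y; apply/negP => /eqP ay; have yR : y \in R by rewrite inE ay.
  have : 0 < #|R| by apply/card_gt0P; exists y.
  by rewrite R0.
have aS : forall y, y \notin W -> y \in S.
  move=> y; rewrite !inE; have := noR y; by case: (Hcases y) => -[-> _].
exists W; split => //.
  by move=> w; rewrite inE => /eqP.
have T13 : \sum_(B in triples D) 1 = 13 by rewrite sum1_card.
have I11 : \sum_(B in triples D) #|B :&: S| = 11.
  rewrite incidence (eq_bigr (fun _ => 1)) ?sum1_card; first by lia.
  by move=> y; rewrite inE => /eqP.
have Lb : \sum_(B in triples D | ~~ (B \subset W)) 1 <= \sum_(B in triples D) #|B :&: S|.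
  rewrite [X in _ <= X](bigID (fun B : {set 'I_18} => B \subset W)) /=; apply: leq_trans (leq_addl _ _).
  apply: leq_sum => B /andP[_ /subsetPn [y yB yW]].
  by apply/card_gt0P; exists y; rewrite inE yB aS.
move: T13; rewrite (bigID (fun B : {set 'I_18} => B \subset W)) /= -card_sum.
move=> h; have hX := leq_trans Lb (eq_leq I11); rewrite ltnNge; apply/negP => hA.
by have := leq_add hA hX; rewrite h.
Qed.
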